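(* Let $B \in \mathbb{R}^{r \times n}$ and $S \subseteq \mathbb{R}^n$, and let $\varphi_B \colon \mathbb{R}^n_+ \to \mathbb{R}^r_+$, $\varphi_B(x) = x^B$. The following are equivalent: (i) $\varphi_B$ is injective with respect to $S$; (ii) $\sigma(\ker(B)) \cap \sigma(S^* ) = \emptyset$.
   Context: $\mathbb{R}_+$ denotes the strictly positive reals. For $x\in\mathbb{R}^n_+$, $(x^B)_j=\prod_{i=1}^n x_i^{b_{ji}}$ (real exponents). A function $g$ on $\mathbb{R}^n_+$ is injective with respect to $S$ if $x,y\in\mathbb{R}^n_+$, $x\ne y$, $x-y\in S$ imply $g(x)\neq g(y)$. $S^*=S\setminus\{0\}$. $\sigma$ denotes the componentwise sign vector, and $\sigma(T)=\{\sigma(x)\mid x\in T\}$. *)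

(* Defs.v *)
From mathcomp Require Import ssreflect ssrfun ssrbool eqtype ssrnat seq fintype bigop.
From Stdlib Require Import Reals.
Open Scope R_scope.

Definition vec (n : nat) := 'I_n -> R.
Definition mat (r n : nat) := 'I_r -> 'I_n -> R.

Definition pos_vec {n} (x : vec n) : Prop := forall i, 0 < x i.

Definition phiB {r n} (B : mat r n) (x : vec n) : vec r :=
  fun j => \big[Rmult/1]_(i < n) Rpower (x i) (B j i).

Definition vsub {n} (x y : vec n) : vec n := fun i => x i - y i.
Definition vzero n : vec n := fun _ => 0.

Definition injective_wrt {n m} (g : vec n -> vec m) (S : vec n -> Prop) : Prop :=
  forall x y : vec n, pos_vec x -> pos_vec y -> x <> y -> S (vsub x y) -> g x <> g y.

Definition kerB {r n} (B : mat r n) (x : vec n) : Prop :=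
  forall j, \big[Rplus/0]_(i < n) (B j i * x i) = 0.

Definition Sstar {n} (S : vec n -> Prop) (x : vec n) : Prop := S x /\ x <> vzero n.

Definition sgnR (a : R) : Z :=
  match Rcase_abs a with
  | left _ => (-1)%Z
  | right _ => if Req_EM_T a 0 then 0%Z else 1%Z
  end.

Definition sigma {n} (x : vec n) : 'I_n -> Z := fun i => sgnR (x i).

Definition sigma_set {n} (T : vec n -> Prop) (s : 'I_n -> Z) : Prop :=
  exists x, T x /\ sigma x = s.

(* Main.v *)
Require Import Defs.
From mathcomp Require Import ssreflect ssrfun ssrbool eqtype ssrnat seq fintype bigop.
From Stdlib Require Import Reals Lra FunctionalExtensionality.
Open Scope R_scope.

Lemma ln_phi r n (B : mat r n) (x : vec n) j : pos_vec x ->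
  0 < phiB B x j /\ ln (phiB B x j) = \big[Rplus/0]_(i < n) (B j i * ln (x i)).
Proof.
move=> px; rewrite /phiB.
apply: (big_ind2 (fun a b => 0 < a /\ ln a = b)).
- split; [lra | exact ln_1].
- move=> a b c d [Ha Hb] [Hc Hd]; split; first by apply Rmult_lt_0_compat.
  by rewrite ln_mult // Hb Hd.
- move=> i _; rewrite /Rpower; split; first by apply exp_pos.
  by rewrite ln_exp.
Qed.

Arguments ln_phi {r n}.

Lemma sum_add n (F G : 'I_n -> R) :
  \big[Rplus/0]_(i < n) (F i + G i) = \big[Rplus/0]_(i < n) F i + \big[Rplus/0]_(i < n) G i.
Proof.
apply: (big_ind3 (fun a b c => a = b + c)); first lra.
- move=> ? ? ? ? ? ? -> ->; lra.
- by [].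
Qed.

Lemma sum_sub n (F G : 'I_n -> R) :
  \big[Rplus/0]_(i < n) (F i - G i) = \big[Rplus/0]_(i < n) F i - \big[Rplus/0]_(i < n) G i.
Proof.
apply: (big_ind3 (fun a b c => a = b - c)); first lra.
- move=> ? ? ? ? ? ? -> ->; lra.
- by [].
Qed.

Lemma sgn_facts a b : sgnR a = sgnR b ->
  (a = 0 -> b = 0) /\ (a < 0 -> b < 0) /\ (0 < a -> 0 < b).
Proof.
rewrite /sgnR.
destruct (Rcase_abs a); destruct (Rcase_abs b);
  try destruct (Req_EM_T a 0); try destruct (Req_EM_T b 0);
  move=> H; try discriminate; repeat split; intros; lra.
Qed.

Lemma sgn_ln a b : 0 < a -> 0 < b -> sgnR (ln a - ln b) = sgnR (a - b).
Proof.
move=> Ha Hb; rewrite /sgnR.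
destruct (Rtotal_order a b) as [H|[H|H]].
- have H1 : ln a < ln b by apply ln_increasing.
  destruct (Rcase_abs (ln a - ln b)); destruct (Rcase_abs (a - b)); try lra; done.
- subst; destruct (Rcase_abs (ln b - ln b)); destruct (Rcase_abs (b - b)); try lra.
  destruct (Req_EM_T (ln b - ln b) 0); destruct (Req_EM_T (b - b) 0); try lra; done.
- have H1 : ln b < ln a by apply ln_increasing.
  destruct (Rcase_abs (ln a - ln b)); destruct (Rcase_abs (a - b)); try lra.
  destruct (Req_EM_T (ln a - ln b) 0); destruct (Req_EM_T (a - b) 0); try lra; done.
Qed.

Theorem mainTheorem7 (r n : nat) (B : mat r n) (S : vec n -> Prop) :
  injective_wrt (phiB B) S <->
  (forall s : 'I_n -> Z, ~ (sigma_set (kerB B) s /\ sigma_set (Sstar S) s)).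
Proof.
split.
- move=> Hinj s [[k [Hk Hks]] [z [[Sz Hz0] Hzs]]].
  have Hsg : forall i, sgnR (k i) = sgnR (z i).
    move=> i; have h1 := f_equal (fun f => f i) Hks; have h2 := f_equal (fun f => f i) Hzs.
    exact (eq_trans h1 (esym h2)).
  pose y : vec n := fun i => if Req_EM_T (z i) 0 then 1 else z i / (exp (k i) - 1).
  pose x : vec n := fun i => y i * exp (k i).
  have Hy : pos_vec y.
    move=> i; rewrite /y /=; destruct (Req_EM_T (z i) 0) as [e|e]; simpl; first lra.
    have [H0 [H1 H2]] := sgn_facts _ _ (esym (Hsg i)).
    destruct (Rtotal_order (z i) 0) as [h|[h|h]]; try lra.
    + have hk := H1 h. have : exp (k i) < 1 by rewrite -exp_0; apply exp_increasing.
      move=> he; replace (z i / (exp (k i) - 1)) with (- z i / (1 - exp (k i))) by (field; lra).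
      apply Rdiv_lt_0_compat; lra.
    + have hk := H2 h. have : 1 < exp (k i) by rewrite -exp_0; apply exp_increasing.
      move=> he; apply Rdiv_lt_0_compat; lra.
  have Hx : pos_vec x by move=> i; apply Rmult_lt_0_compat; [apply Hy|apply exp_pos].
  have Hxy : vsub x y = z.
    apply functional_extensionality => i; rewrite /vsub /x /y /=.
    destruct (Req_EM_T (z i) 0) as [e|e]; simpl.
    + have [H0 _] := sgn_facts _ _ (esym (Hsg i)). rewrite e (H0 e) exp_0; lra.
    + have hk : k i <> 0.
        move=> hk; have [H0 _] := sgn_facts _ _ (Hsg i); exact (e (H0 hk)).
      have he : exp (k i) - 1 <> 0.
        move=> he; apply hk; apply exp_inv; rewrite exp_0; lra.
      field; exact he.
  apply: (Hinj x y Hx Hy) => //.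
  + move=> E; apply Hz0; rewrite -Hxy E; apply functional_extensionality => i.
    rewrite /vsub /vzero; lra.
  + by rewrite Hxy.
  + apply functional_extensionality => j.
    have [px lx] := ln_phi B x j Hx; have [py ly] := ln_phi B y j Hy.
    apply ln_inv => //; rewrite lx ly.
    have -> : \big[Rplus/0]_(i < n) (B j i * ln (x i)) =
              \big[Rplus/0]_(i < n) (B j i * ln (y i) + B j i * k i).
      apply eq_bigr => i _; rewrite /x ln_mult; [|apply Hy|apply exp_pos].
      rewrite ln_exp; ring.
    rewrite sum_add Hk; ring.
- move=> H x y Hx Hy Hne HS Heq.
  apply (H (Defs.sigma (vsub x y))); split.
  + exists (fun i => ln (x i) - ln (y i)); split.
    * move=> j; have [_ lx] := ln_phi B x j Hx; have [_ ly] := ln_phi B y j Hy.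
      have -> : \big[Rplus/0]_(i < n) (B j i * (ln (x i) - ln (y i))) =
                \big[Rplus/0]_(i < n) (B j i * ln (x i) - B j i * ln (y i)).
        apply eq_bigr => i _; ring.
      rewrite sum_sub -lx -ly Heq; ring.
    * apply functional_extensionality => i; rewrite /Defs.sigma /vsub.
      by apply sgn_ln.
  + exists (vsub x y); split => //; split => // E; apply Hne.
    apply functional_extensionality => i.
    have := f_equal (fun f => f i) E; rewrite /vsub /vzero /= => h; lra.
Qed.
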